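(* Let $\mathcal{A}^{\mathbb{Z}}$ be a unital associative $\mathbb{Z}$-algebra which is finitely generated and free as a $\mathbb{Z}$-module, and for a field $\mathbb{F}$ write $\mathcal{A}^{\mathbb{F}}=\mathcal{A}^{\mathbb{Z}}\otimes_{\mathbb{Z}}\mathbb{F}$. Let $\mathbb{K}$ be a field with $\mathrm{char}(\mathbb{K})=0$. Then $\mathcal{A}^{\mathbb{K}}$ is semisimple if and only if $\mathcal{A}^{\mathbb{F}_p}$ is semisimple for infinitely many primes $p$.
   Context: $\mathbb{F}_p$ denotes the field with $p$ elements. *)

(* Defs.v *)
From HB Require Import structures.
From mathcomp Require Import all_boot all_order all_algebra.
Set Implicit Arguments. Unset Strict Implicit. Unset Printing Implicit Defensive.
Import Order.TTheory GRing.Theory Num.Theory.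
Local Open Scope ring_scope.

(* A unital associative Z-algebra A^Z, free of finite rank n as a Z-module,
   is given by its integer structure constants w.r.t. a Z-basis b_0..b_(n-1):
     b_i * b_j = \sum_k c i j k * b_k,   unit = \sum_i e i * b_i.          *)
Definition zalg_assoc (n : nat) (c : 'I_n -> 'I_n -> 'I_n -> int) : Prop :=
  forall i j l m : 'I_n,
    \sum_(k < n) c i j k * c k l m = \sum_(k < n) c j l k * c i k m.

Definition zalg_unit (n : nat) (c : 'I_n -> 'I_n -> 'I_n -> int)
    (e : 'I_n -> int) : Prop :=
  forall j k : 'I_n,
    \sum_(i < n) e i * c i j k = (j == k)%:Z /\
    \sum_(i < n) e i * c j i k = (j == k)%:Z.

(* A^F = A^Z (x)_Z F is F^n (row vectors) with the multiplication given by
   the images in F of the structure constants. *)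
Definition algmul (F : fieldType) (n : nat) (c : 'I_n -> 'I_n -> 'I_n -> int)
    (x y : 'rV[F]_n) : 'rV[F]_n :=
  \row_(k < n) \sum_(i < n) \sum_(j < n) x 0 i * y 0 j * (c i j k)%:~R.

Definition left_ideal (F : fieldType) (n : nat)
    (c : 'I_n -> 'I_n -> 'I_n -> int) (U : 'M[F]_n) : Prop :=
  forall a x : 'rV[F]_n, (x <= U)%MS -> (algmul c a x <= U)%MS.

(* A^F is semisimple: semisimple as a left module over itself, i.e. every
   left ideal has a complementary left ideal (A = U (+) W). *)
Definition alg_semisimple (F : fieldType) (n : nat)
    (c : 'I_n -> 'I_n -> 'I_n -> int) : Prop :=
  forall U : 'M[F]_n, left_ideal c U ->
    exists W : 'M[F]_n, left_ideal c W /\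
      (1%:M <= U + W)%MS /\ (U :&: W <= (0 : 'M[F]_n))%MS.

(* Main.v *)
From HB Require Import structures.
From mathcomp Require Import all_boot all_order all_algebra.
From mathcomp Require Import ring.
Require Import Defs.
Import Order.TTheory GRing.Theory Num.Theory.
Set Implicit Arguments. Unset Strict Implicit. Unset Printing Implicit Defensive.
Local Open Scope ring_scope.

Lemma tr_pid (F : fieldType) m r : (r <= m)%N -> \tr (pid_mx r : 'M[F]_m) = r%:R.
Proof.
move=> rm; rewrite /mxtrace.
under eq_bigr => i _ do rewrite mxE eqxx /=.
have -> : r%:R = \sum_(i < r) (1 : F) by rewrite sumr_const card_ord.
rewrite (big_ord_widen m (fun _ => (1:F))) // [RHS]big_mkcond /=.
by apply: eq_bigr => i _; case: (i < r)%N.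
Qed.

Lemma tr_idem (F : fieldType) m (E : 'M[F]_m) : E *m E = E -> \tr E = (\rank E)%:R.
Proof.
move=> EE.
have EL := mulmx_ebase E.
move: (col_ebase_unit E) (row_ebase_unit E) EL.
move: (col_ebase E) (row_ebase E) => L U uL uU EL.
set P : 'M_m := pid_mx _ in EL.
have PP : P *m (U *m L) *m P = P.
  have HH : invmx L *m (E *m E) *m invmx U = invmx L *m E *m invmx U by rewrite EE.
  move: HH; rewrite -EL !mulmxA (mulVmx uL) !mul1mx !(mulmxK uU).
  by [].
rewrite -{1}EL mxtrace_mulC mulmxA.
have -> : P = P *m P by rewrite pid_mx_id ?rank_leq_col.
rewrite -!mulmxA mxtrace_mulC -!mulmxA.
rewrite mxtrace_mulC -!mulmxA mxtrace_mulC PP tr_pid //; exact: rank_leq_row.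
Qed.

Lemma horner_mx_sum (F : fieldType) n' (M : 'M[F]_n'.+1) (p : {poly F}) :
  horner_mx M p = \sum_(i < size p) p`_i *: M ^+ i.
Proof.
rewrite -{1}[p]coefK poly_def rmorph_sum /=.
by apply: eq_bigr => i _; rewrite horner_mxZ rmorphXn /= horner_mx_X.
Qed.

Lemma nilp_tr (F : fieldType) n' (M : 'M[F]_n'.+1) :
  (forall k, (0 < k)%N -> \tr (M ^+ k) = 0) ->
  (forall i, (0 < i <= n'.+1)%N -> i%:R != 0 :> F) ->
  exists k, M ^+ k = 0.
Proof.
move=> trM chF.
pose q := 'X * char_poly M.
have hq : horner_mx M q = 0 by rewrite rmorphM /= Cayley_Hamilton mulr0.
have q0 : q != 0 by rewrite mulf_neq0 ?polyX_eq0 // monic_neq0 ?char_poly_monic.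
have [m [r nr Dq]] := multiplicity_XsubC q 0.
move: nr; rewrite q0 /= => nr.
rewrite subr0 in Dq.
have m0 : (0 < m)%N.
  case: m Dq => // Dq; move: nr; rewrite -(mulr1 r) -(expr0 'X) -Dq.
  by rewrite /root /q hornerM hornerX mul0r eqxx.
have cop : coprimep ('X ^+ m) r.
  by apply: coprimep_expl; rewrite coprimep_sym coprimepX.
have [[a b] /= Bz] := Bezout_eq1_coprimepP _ _ cop.
pose e := horner_mx M (a * 'X ^+ m).
have e1 : horner_mx M (b * r) = 1 - e.
  have -> : b * r = 1 - a * 'X ^+ m by rewrite -Bz addrAC subrr add0r.
  by rewrite rmorphB rmorph1.
have ee : e * e = e.
  have : e * (1 - e) = 0.
    rewrite -e1 /e -rmorphM /=. have -> : a * 'X^m * (b * r) = (a * b) * q by rewrite Dq; ring.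
    by rewrite rmorphM /= hq mulr0.
  by rewrite mulrBr mulr1 => /eqP; rewrite subr_eq0 => /eqP <-.
have tre : \tr e = 0.
  rewrite /e rmorphM /= horner_mx_sum mulr_suml raddf_sum /= big1 // => i _.
  by rewrite rmorphXn /= horner_mx_X -scalerAl -exprD mxtraceZ trM ?mulr0 // addn_gt0 m0 orbT.
have e0 : e = 0.
  move: tre; rewrite tr_idem //.
  case: (posnP (\rank e)) => [/eqP|]; first by rewrite mxrank_eq0 => /eqP.
  by move=> rp /eqP; rewrite (negPf (chF _ _)) // rp rank_leq_col.
exists m.
have hbr : horner_mx M b * horner_mx M r = 1 by rewrite -rmorphM /= e1 e0 subr0.
have hrm : horner_mx M r * M ^+ m = 0.
  by rewrite -hq Dq rmorphM /= rmorphXn /= horner_mx_X.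
by rewrite -[M ^+ m]mul1r -hbr -mulrA hrm mulr0.
Qed.

Definition Lm (F : fieldType) n (c : 'I_n -> 'I_n -> 'I_n -> int) (x : 'rV[F]_n) : 'M[F]_n :=
  \matrix_(j, k) \sum_i x 0 i * (c i j k)%:~R.

Lemma algmulE (F : fieldType) n c (x y : 'rV[F]_n) : algmul c x y = y *m Lm c x.
Proof.
apply/rowP => k; rewrite !mxE exchange_big /=.
apply: eq_bigr => j _; rewrite mxE mulr_sumr; apply: eq_bigr => i _.
by rewrite mulrCA mulrA.
Qed.

Lemma LmD (F : fieldType) n c (x y : 'rV[F]_n) : Lm c (x + y) = Lm c x + Lm c y.
Proof.
by apply/matrixP => j k; rewrite !mxE -big_split; apply: eq_bigr => i _; rewrite mxE mulrDl.
Qed.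

Lemma LmZ (F : fieldType) n c a (x : 'rV[F]_n) : Lm c (a *: x) = a *: Lm c x.
Proof.
by apply/matrixP => j k; rewrite !mxE mulr_sumr; apply: eq_bigr => i _; rewrite mxE mulrA.
Qed.

Lemma Lm0 (F : fieldType) n c : Lm c (0 : 'rV[F]_n) = 0.
Proof. by apply/matrixP => j k; rewrite !mxE big1 // => i _; rewrite mxE mul0r. Qed.

Lemma Lm_sum (F : fieldType) n c I (r : seq I) (P : pred I) (f : I -> 'rV[F]_n) :
  Lm c (\sum_(i <- r | P i) f i) = \sum_(i <- r | P i) Lm c (f i).
Proof.
elim/big_rec2: _ => [|i y1 y2 _ <-]; first exact: Lm0.
by rewrite LmD.
Qed.

Lemma Lm_assoc (F : fieldType) n c (Hassoc : zalg_assoc c) (x y : 'rV[F]_n) :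
  Lm c (y *m Lm c x) = Lm c y *m Lm c x.
Proof.
apply/matrixP => j m; rewrite !mxE.
transitivity (\sum_a \sum_i \sum_l y 0 a * x 0 i * (c i a l * c l j m)%:~R).
  under eq_bigr => l _ do rewrite !mxE mulr_suml.
  rewrite exchange_big /=; apply: eq_bigr => a _.
  under eq_bigr => l _ do rewrite mxE mulr_sumr mulr_suml.
  rewrite exchange_big /=; apply: eq_bigr => i _; apply: eq_bigr => l _.
  by rewrite rmorphM /=; ring.
transitivity (\sum_a \sum_i \sum_k y 0 a * x 0 i * (c a j k * c i k m)%:~R).
  apply: eq_bigr => a _; apply: eq_bigr => i _.
  by rewrite -!mulr_sumr -!rmorph_sum /= Hassoc.
under [RHS]eq_bigr => k _ do rewrite !mxE mulr_suml.
rewrite [RHS]exchange_big /=; apply: eq_bigr => a _.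
under [RHS]eq_bigr => k _ do rewrite mulr_sumr.
rewrite [RHS]exchange_big /=; apply: eq_bigr => i _; apply: eq_bigr => k _.
by rewrite rmorphM /=; ring.
Qed.

Definition uvec (F : fieldType) n (e : 'I_n -> int) : 'rV[F]_n := \row_i (e i)%:~R.

Lemma Lm_u (F : fieldType) n c e (Hunit : zalg_unit c e) : Lm c (uvec F e) = 1%:M :> 'M_n.
Proof.
apply/matrixP => j k; rewrite !mxE.
under eq_bigr => i _ do rewrite mxE -intrM.
by rewrite -rmorph_sum /= (Hunit j k).1.
Qed.

Lemma u_Lm (F : fieldType) n c e (Hunit : zalg_unit c e) (x : 'rV[F]_n) :
  uvec F e *m Lm c x = x.
Proof.
apply/rowP => k; rewrite !mxE.
under eq_bigr => j _ do rewrite !mxE mulr_sumr.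
rewrite exchange_big /=.
have H1 : forall i : 'I_n, \sum_j (e j)%:~R * (x 0 i * (c i j k)%:~R) = x 0 i * ((i == k)%:Z)%:~R :> F.
  move=> i; under eq_bigr => j _ do rewrite mulrCA -intrM.
  by rewrite -mulr_sumr -rmorph_sum /= (Hunit i k).2.
under eq_bigr => i _ do rewrite H1.
rewrite (bigD1 k) //= big1 => [|i ik]; first by rewrite eqxx mulr1 addr0.
by rewrite (negPf ik) mulr0.
Qed.

Lemma Lm_delta (F : fieldType) n c (i j k : 'I_n) : Lm c ('e_i : 'rV[F]_n) j k = (c i j k)%:~R.
Proof.
rewrite mxE (bigD1 i) //= big1 => [|l li]; first by rewrite mxE !eqxx mul1r addr0.
by rewrite mxE eqxx (negPf li) mul0r.
Qed.

Lemma LmE (F : fieldType) n c (x : 'rV[F]_n) : Lm c x = \sum_i x 0 i *: Lm c 'e_i.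
Proof.
by rewrite {1}(row_sum_delta x) Lm_sum; apply: eq_bigr => i _; rewrite LmZ.
Qed.

Definition Tf (F : fieldType) n c (x y : 'rV[F]_n) := \tr (Lm c y *m Lm c x).
Definition Gm (F : fieldType) n c : 'M[F]_n := \matrix_(i, j) Tf c 'e_i 'e_j.
Arguments Gm {F n}.

Lemma tr_sum (F : fieldType) n I (r : seq I) (P : pred I) (f : I -> 'M[F]_n) :
  \tr (\sum_(i <- r | P i) f i) = \sum_(i <- r | P i) \tr (f i).
Proof.
elim/big_rec2: _ => [|i y1 y2 _ <-]; first exact: mxtrace0.
by rewrite mxtraceD.
Qed.

Lemma TfE (F : fieldType) n c (x y : 'rV[F]_n) :
  Tf c x y = \sum_i \sum_j x 0 i * y 0 j * Gm c i j.
Proof.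
rewrite /Tf (LmE c x) (LmE c y) mulmx_suml tr_sum [RHS]exchange_big /=.
apply: eq_bigr => j _; rewrite mulmx_sumr tr_sum; apply: eq_bigr => i _.
by rewrite -scalemxAr -scalemxAl !mxtraceZ mxE /Tf mulrA [x 0 i * _]mulrC.
Qed.

Lemma TfC (F : fieldType) n c (x y : 'rV[F]_n) : Tf c x y = Tf c y x.
Proof. exact: mxtrace_mulC. Qed.

Lemma Gm_sym (F : fieldType) n c : (Gm c)^T = Gm c :> 'M[F]_n.
Proof. by apply/matrixP => i j; rewrite !mxE TfC. Qed.

Lemma Tf_rowG (F : fieldType) n c (x : 'rV[F]_n) j : (x *m Gm c) 0 j = Tf c x 'e_j.
Proof.
rewrite TfE mxE; apply: eq_bigr => i _.
rewrite (bigD1 j) //= big1 => [|k kj]; first by rewrite !mxE !eqxx mulr1 addr0.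
by rewrite !mxE eqxx (negPf kj) mulr0 mul0r.
Qed.

Definition Gint n (c : 'I_n -> 'I_n -> 'I_n -> int) : 'M[int]_n :=
  \matrix_(i, j) \sum_l \sum_k c j l k * c i k l.

Lemma Gm_int (F : fieldType) n c : Gm c = map_mx (fun z : int => z%:~R) (Gint c) :> 'M[F]_n.
Proof.
apply/matrixP => i j; rewrite !mxE /Tf /mxtrace rmorph_sum /=; apply: eq_bigr => l _.
rewrite !mxE rmorph_sum /=; apply: eq_bigr => k _.
by rewrite !Lm_delta intrM.
Qed.

Lemma TfE2 (F : fieldType) n c (x y : 'rV[F]_n) :
  Tf c x y = \sum_j y 0 j * (x *m Gm c) 0 j.
Proof.
rewrite TfE exchange_big; apply: eq_bigr => j _; rewrite mxE mulr_sumr.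
by apply: eq_bigr => i _; rewrite mulrCA mulrA.
Qed.

Lemma Tf_assoc (F : fieldType) n c (Hassoc : zalg_assoc c) (x w a : 'rV[F]_n) :
  Tf c (x *m Lm c a) w = Tf c x (a *m Lm c w).
Proof.
by rewrite /Tf !Lm_assoc // mulmxA mxtrace_mulC mulmxA.
Qed.

Lemma SS2 (F : fieldType) n' (c : 'I_n'.+1 -> 'I_n'.+1 -> 'I_n'.+1 -> int) e
  (Hassoc : zalg_assoc c) (Hunit : zalg_unit c e)
  (chF : forall i, (0 < i <= n'.+1)%N -> i%:R != 0 :> F) :
  alg_semisimple F c -> \det (Gm c : 'M[F]_n'.+1) != 0.
Proof.
move=> SS; apply/negP => /det0P [v v0 vG].
set U := kermx (Gm c : 'M[F]_n'.+1).
have kerP : forall z : 'rV_n'.+1, (z <= U)%MS -> forall y, Tf c z y = 0.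
  move=> z /sub_kermxP zG y; rewrite TfE2 zG big1 // => j _; by rewrite mxE mulr0.
have kerI : forall z : 'rV_n'.+1, (forall j, Tf c z 'e_j = 0) -> (z <= U)%MS.
  by move=> z H; apply/sub_kermxP/rowP => j; rewrite Tf_rowG H mxE.
have LI : left_ideal c U.
  move=> a x xU; rewrite algmulE; apply: kerI => j.
  by rewrite Tf_assoc // kerP.
have [W [LW [full cap]]] := SS U LI.
set u := uvec F e.
have : (u <= U + W)%MS by apply: submx_trans full; apply: submx1.
case/sub_addsmxP => [[r1 w1]] /= Du.
set r := r1 *m U in Du; set w := w1 *m W in Du.
have rU : (r <= U)%MS by apply: submxMl.
have wW : (w <= W)%MS by apply: submxMl.
have Lpow : forall k, Lm c (u *m (Lm c r) ^+ k) = (Lm c r) ^+ k.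
  elim => [|k IH]; first by rewrite expr0 mulmx1 Lm_u.
  by rewrite exprSr -mulmxE mulmxA Lm_assoc // IH.
have trz : forall k, (0 < k)%N -> \tr ((Lm c r) ^+ k) = 0.
  case => // k _.
  have zU : (u *m (Lm c r) ^+ k.+1 <= U)%MS.
    rewrite exprS -mulmxE mulmxA u_Lm // -{1}Lpow -algmulE.
    exact: LI.
  have := kerP _ zU u; rewrite /Tf Lm_u // mul1mx Lpow => ->; by [].
have [N HN] := nilp_tr trz chF.
have xr : forall x : 'rV_n'.+1, (x <= U)%MS -> r *m Lm c x = x.
  move=> x xU.
  have wx : w *m Lm c x = 0.
    apply/eqP; rewrite -submx0; apply: submx_trans cap; rewrite sub_capmx.
    apply/andP; split; last by rewrite -algmulE; apply: LW.
    have -> : w *m Lm c x = x - r *m Lm c x.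
      by rewrite -{2}(u_Lm Hunit x) -/u Du mulmxDl addrC addKr.
    by apply: addmx_sub => //; rewrite eqmx_opp -algmulE; apply: LI.
  by rewrite -{2}(u_Lm Hunit x) -/u Du mulmxDl wx addr0.
have xk : forall x : 'rV_n'.+1, (x <= U)%MS -> forall k, u *m (Lm c r) ^+ k *m Lm c x = x.
  move=> x xU; elim => [|k IH]; first by rewrite expr0 mulmx1 u_Lm.
  by rewrite exprSr -mulmxE mulmxA -(mulmxA _ (Lm c r)) -Lm_assoc // xr.
have vU : (v <= U)%MS by apply/sub_kermxP.
by move: v0; rewrite -(xk v vU N) HN mulmx0 mul0mx eqxx.
Qed.

Lemma TfB (F : fieldType) n c (x y1 y2 : 'rV[F]_n) :
  Tf c x (y1 - y2) = Tf c x y1 - Tf c x y2.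
Proof.
rewrite !TfE2 -sumrB; apply: eq_bigr => j _; by rewrite !mxE mulrDl mulNr.
Qed.

Lemma reidx1 (F : fieldType) n m (A B : 'M[F]_n) (X : 'I_n -> 'I_n -> 'M[F]_m) :
  \sum_i \sum_j A i j *: \sum_k B j k *: X k i = \sum_i \sum_k (A *m B) i k *: X k i.
Proof.
apply: eq_bigr => i _.
under eq_bigr => j _ do rewrite scaler_sumr.
rewrite exchange_big /=; apply: eq_bigr => k _.
by rewrite mxE scaler_suml; apply: eq_bigr => j _; rewrite scalerA.
Qed.

Lemma reidx2 (F : fieldType) n m (A B : 'M[F]_n) (X : 'I_n -> 'I_n -> 'M[F]_m) :
  \sum_i \sum_j A i j *: \sum_k B i k *: X j k = \sum_j \sum_k (A^T *m B) j k *: X j k.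
Proof.
under eq_bigr => i _ do under eq_bigr => j _ do rewrite scaler_sumr.
rewrite exchange_big /=; apply: eq_bigr => j _.
rewrite exchange_big /=; apply: eq_bigr => k _.
by rewrite mxE scaler_suml; apply: eq_bigr => i _; rewrite scalerA mxE.
Qed.

Lemma aux_e (F : fieldType) n (G L : 'M[F]_n) j l :
  \sum_k (('e_l : 'rV[F]_n) *m L) 0 k * (('e_j : 'rV[F]_n) *m G) 0 k = (G *m L^T) j l.
Proof.
rewrite mxE; apply: eq_bigr => k _; by rewrite -!rowE !mxE mulrC.
Qed.

Lemma SS1 (F : fieldType) n (c : 'I_n -> 'I_n -> 'I_n -> int) e
  (Hassoc : zalg_assoc c) (Hunit : zalg_unit c e) :
  \det (Gm c : 'M[F]_n) != 0 -> alg_semisimple F c.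
Proof.
move=> dG.
set G : 'M[F]_n := Gm c.
have uG : G \in unitmx by rewrite unitmxE unitfE.
set Gi := invmx G.
have GiT : Gi^T = Gi by rewrite /Gi trmx_inv Gm_sym.
have nondeg : forall z : 'rV[F]_n, (forall k, Tf c 'e_k z = 0) -> z = 0.
  move=> z H; have zG : z *m G = 0 by apply/rowP => k; rewrite Tf_rowG TfC H mxE.
  by rewrite -(mulmxK uG z) zG mul0mx.
set u := uvec F e.
set s := \sum_i \sum_j Gi i j *: (('e_j : 'rV[F]_n) *m Lm c 'e_i).
have Ls : Lm c s = \sum_i \sum_j Gi i j *: (Lm c 'e_j *m Lm c 'e_i).
  rewrite Lm_sum; apply: eq_bigr => i _; rewrite Lm_sum; apply: eq_bigr => j _.
  by rewrite LmZ Lm_assoc.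
have su : s = u.
  apply/eqP; rewrite -subr_eq0; apply/eqP/nondeg => k.
  rewrite TfB; apply/eqP; rewrite subr_eq0; apply/eqP.
  rewrite {2}/Tf Lm_u // mul1mx /Tf Ls mulmx_suml tr_sum.
  under eq_bigr => i _ do rewrite mulmx_suml tr_sum.
  have -> : \tr (Lm c 'e_k) = \tr (Lm c 'e_k *m G *m Gi) by rewrite mulmxK.
  rewrite [RHS]/mxtrace; apply: eq_bigr => i _; rewrite mxE; apply: eq_bigr => j _.
  rewrite -scalemxAl mxtraceZ -mulmxA -Lm_assoc // -[X in _ * X]/(Tf c ('e_i *m Lm c 'e_k) 'e_j) -Tf_rowG -mulmxA -rowE mxE -/G.
  have := congr1 (fun M : 'M_n => M i j) GiT; rewrite mxE => ->; exact: mulrC.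
have Ls1 : Lm c s = 1%:M by rewrite su Lm_u.
move=> U LI.
have [P Pid Psub] : exists2 P : 'M[F]_n,
    (forall x : 'rV[F]_n, (x <= U)%MS -> x *m P = x) & (forall x : 'rV[F]_n, (x *m P <= U)%MS).
  exists (proj_mx U U^C%MS); last by move=> x; exact: proj_mx_sub.
  by move=> x xU; rewrite proj_mx_id //; exact: capmx_compl.
set X := fun j i => Lm c 'e_j *m P *m Lm c ('e_i : 'rV[F]_n).
set Q := \sum_i \sum_j Gi i j *: X j i.
have QU : forall x : 'rV[F]_n, (x *m Q <= U)%MS.
  move=> x; rewrite mulmx_sumr; apply: summx_sub => i _.
  rewrite mulmx_sumr; apply: summx_sub => j _.
  rewrite -scalemxAr; apply: scalemx_sub.
  have := LI 'e_i (x *m Lm c 'e_j *m P) (Psub _).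
  by rewrite algmulE /X !mulmxA.
have Qid : forall x : 'rV[F]_n, (x <= U)%MS -> x *m Q = x.
  move=> x xU.
  have -> : x *m Q = x *m Lm c s.
    rewrite Ls mulmx_sumr [RHS]mulmx_sumr; apply: eq_bigr => i _.
    rewrite mulmx_sumr [RHS]mulmx_sumr; apply: eq_bigr => j _.
    rewrite -!scalemxAr /X !mulmxA Pid //.
    by rewrite -algmulE; apply: LI.
  by rewrite Ls1 mulmx1.
have central : forall a : 'rV[F]_n, Lm c a *m Q = Q *m Lm c a.
  move=> a.
  set R : 'M[F]_n := \matrix_(j, k) (a *m Lm c 'e_j) 0 k.
  set La := Lm c a.
  have HL : forall j i, La *m X j i = \sum_k R j k *: X k i.
    move=> j i; rewrite /X !mulmxA -Lm_assoc // (LmE c (a *m _)).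
    rewrite !mulmx_suml; apply: eq_bigr => k _; by rewrite -!scalemxAl /R !mxE.
  have HR : forall j i, X j i *m La = \sum_k La i k *: X j k.
    move=> j i; rewrite /X -mulmxA -Lm_assoc // (LmE c ('e_i *m _)) !mulmx_sumr.
    apply: eq_bigr => k _; by rewrite -rowE mxE -!scalemxAr.
  have RG : R *m G = G *m La^T.
    apply/matrixP => j l; transitivity ((row j (R *m G)) 0 l); first by rewrite !mxE.
    rewrite row_mul.
    have -> : row j R = a *m Lm c 'e_j by apply/rowP => k; rewrite !mxE.
    rewrite Tf_rowG.
    transitivity (Tf c 'e_j ('e_l *m La)).
      by rewrite /Tf !Lm_assoc // mulmxA.
    by rewrite TfE2 aux_e.
  have GiR : Gi *m R = La^T *m Gi.
    by rewrite -[Gi *m R](mulmxK uG) -(mulmxA Gi R G) RG mulmxA (mulVmx uG) mul1mx.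
  rewrite mulmx_sumr; under eq_bigr => i _ do rewrite mulmx_sumr.
  under eq_bigr => i _ do under eq_bigr => j _ do rewrite -scalemxAr HL.
  rewrite mulmx_suml; under [RHS]eq_bigr => i _ do rewrite mulmx_suml.
  under [RHS]eq_bigr => i _ do under eq_bigr => j _ do rewrite -scalemxAl HR.
  rewrite reidx1 reidx2 [RHS]exchange_big /=.
  apply: eq_bigr => i _; apply: eq_bigr => k _; congr (_ *: _).
  have -> : (Gi^T *m La) k i = ((La^T *m Gi)^T) k i by rewrite trmx_mul trmxK.
  by rewrite GiR [RHS]mxE.
exists (kermx Q); split.
  move=> a x /sub_kermxP xQ; apply/sub_kermxP.
  by rewrite algmulE -mulmxA central mulmxA xQ mul0mx.
have allrow : forall y : 'rV[F]_n, (y <= U + kermx Q)%MS.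
  move=> y; have -> : y = y *m Q + (y - y *m Q) by rewrite addrC subrK.
  apply: addmx_sub_adds => //; apply/sub_kermxP.
  by rewrite mulmxBl (Qid (y *m Q) (QU y)) subrr.
split; first by apply/row_subP => i; apply: allrow.
apply/row_subP => i; set x := row i _.
have xU : (x <= U)%MS by apply: submx_trans (capmxSl _ _); exact: row_sub.
have xW : (x <= kermx Q)%MS by apply: submx_trans (capmxSr _ _); exact: row_sub.
move/sub_kermxP: xW; rewrite Qid // => ->; exact: sub0mx.
Qed.

Lemma detGm (F : fieldType) n c : \det (Gm c : 'M[F]_n) = (\det (Gint c))%:~R.
Proof. by rewrite Gm_int det_map_mx. Qed.

Lemma intr_case (R : fieldType) (d : int) : (d%:~R == 0 :> R) = (`|d|%N%:R == 0 :> R).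
Proof.
by case: d => m; rewrite ?NegzE ?mulrNz ?oppr_eq0 //=.
Qed.

Lemma intr0_char0 (K : fieldType) (HK : [pchar K] =i pred0) (d : int) :
  d != 0 -> d%:~R != 0 :> K.
Proof.
move=> d0; rewrite intr_case ((pcharf0P K).1 HK).
by rewrite absz_eq0.
Qed.

Lemma natr_Fp p i : prime p -> (0 < i < p)%N -> i%:R != 0 :> 'F_p.
Proof.
move=> pp /andP [i0 ip]; rewrite -(dvdn_pcharf (pchar_Fp pp)).
by apply/negP => /dvdn_leq => /(_ i0); rewrite leqNgt ip.
Qed.

Lemma intr0_Fp p (d : int) : prime p -> d != 0 -> (`|d| < p)%N -> d%:~R != 0 :> 'F_p.
Proof.
move=> pp d0 dp; rewrite intr_case; apply: natr_Fp => //.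
by rewrite absz_gt0 d0.
Qed.

Unset Implicit Arguments.

Theorem propositionA2 (n : nat) (c : 'I_n -> 'I_n -> 'I_n -> int)
    (e : 'I_n -> int) (Hassoc : zalg_assoc c) (Hunit : zalg_unit c e)
    (K : fieldType) (HK : [pchar K] =i pred0) :
  alg_semisimple K c <->
  (forall N : nat, exists p : nat,
      (N < p)%N /\ prime p /\ alg_semisimple 'F_p c).
Proof.
set d := \det (Gint c).
have good : d != 0 -> forall N : nat, exists p : nat,
      (N < p)%N /\ prime p /\ alg_semisimple 'F_p c.
  move=> d0 N; have [p Np pp] := prime_above (maxn N `|d|).
  exists p; split; first by apply: leq_ltn_trans Np; exact: leq_maxl.
  split => //; apply: (SS1 Hassoc Hunit); rewrite detGm; apply: intr0_Fp => //.
  by apply: leq_ltn_trans Np; exact: leq_maxr.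
split.
  move=> SSK; apply: good.
  case: n c e Hassoc Hunit SSK @d => [|n'] c e Hassoc Hunit SSK d.
    by rewrite /d det_mx00.
  have chK : forall i, (0 < i <= n'.+1)%N -> i%:R != 0 :> K.
    by move=> i /andP [i0 _]; rewrite ((pcharf0P K).1 HK) -lt0n.
  have := SS2 Hassoc Hunit chK SSK; rewrite detGm.
  by move=> h; apply/eqP => dz; move: h; rewrite -/d dz mulr0z eqxx.
move=> H.
have d0 : d != 0.
  clear good; case: n c e Hassoc Hunit H @d => [|n'] c e Hassoc Hunit H d.
    by rewrite /d det_mx00.
  have [p [np [pp SSp]]] := H n'.+1.
  have chF : forall i, (0 < i <= n'.+1)%N -> i%:R != 0 :> 'F_p.
    move=> i /andP [i0 ile]; apply: natr_Fp => //.
    by rewrite i0 /=; apply: leq_ltn_trans np.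
  have := SS2 Hassoc Hunit chF SSp; rewrite detGm.
  by move=> h; apply/eqP => dz; move: h; rewrite -/d dz mulr0z eqxx.
apply: (SS1 Hassoc Hunit); rewrite detGm; exact: intr0_char0.
Qed.
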